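(* Let $u\in(0,1)$ and $\mathscr{C}_n^u:=F^{-(n-1)}[u,1]$ for $n\ge1$. Then the sequence $(\lambda(\mathscr{C}_n^u))_{n\ge1}$ is decreasing.
   Context: $\lambda$ denotes Lebesgue measure on $[0,1]$. $F:[0,1]\to[0,1]$ is the Farey map, $F(x)=x/(1-x)$ for $0\le x\le 1/2$ and $F(x)=(1-x)/x$ for $1/2<x\le 1$; $F^{-k}$ denotes preimage under the $k$-th iterate. *)

(* Defs.v *)
From Stdlib Require Import Reals ClassicalEpsilon.
Open Scope R_scope.

Definition farey (x : R) : R :=
  if Rle_dec x (1/2) then x / (1 - x) else (1 - x) / x.

Definition farey_iter (k : nat) (x : R) : R := Nat.iter k farey x.

Definition farey_preimage (k : nat) (A : R -> Prop) (x : R) : Prop :=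
  0 <= x <= 1 /\ A (farey_iter k x).

Definition Cset (u : R) (n : nat) : R -> Prop :=
  farey_preimage (n - 1) (fun y => u <= y <= 1).

(* Lebesgue (outer) measure: infimum of total lengths of countable covers
   by open intervals (a_i, b_i) with summable lengths. *)
Definition cover_sum (A : R -> Prop) (s : R) : Prop :=
  exists a b : nat -> R,
    (forall i, a i <= b i) /\
    (forall x, A x -> exists i, a i < x < b i) /\
    infinite_sum (fun i => b i - a i) s.

Definition is_glb_R (P : R -> Prop) (m : R) : Prop :=
  (forall r, P r -> m <= r) /\ (forall m', (forall r, P r -> m' <= r) -> m' <= m).

Definition lebesgue (A : R -> Prop) : R :=
  epsilon (inhabits 0) (fun m => is_glb_R (cover_sum A) m).

(* Main.v *)
Require Import Defs.
From Stdlib Require Import Reals Lra Lia Psatz ClassicalEpsilon FunctionalExtensionality PropExtensionality.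
Open Scope R_scope.


Lemma Rdiv_le_0_compat a b : 0 <= a -> 0 < b -> 0 <= a / b.
Proof. intros; apply Rle_mult_inv_pos; auto. Qed.

Definition Kop (f : R -> R) (t : R) : R :=
  (1 - t/(1+t)) * f (t/(1+t)) + (t/(1+t)) * f (1 - t/(1+t)).
Definition incr01 (f : R -> R) := forall x y, 0 <= x -> x <= y -> y <= 1 -> f x <= f y.
Definition conc01 (f : R -> R) := forall x y th, 0 <= x <= 1 -> 0 <= y <= 1 -> 0 <= th <= 1 ->
  th * f x + (1 - th) * f y <= f (th * x + (1 - th) * y).

Lemma g_conc f : incr01 f -> conc01 f -> conc01 (fun a => (1 - a) * f a).
Proof.
  intros Hi Hc x y th Hx Hy Hth. set (z := th*x + (1-th)*y).
  assert (Hz : 0 <= z <= 1) by (unfold z; nra).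
  destruct (Req_dec z 1) as [Ez|Ez].
  - assert (E1 : th*(1-x) = 0) by (unfold z in Ez; nra).
    assert (E2 : (1-th)*(1-y) = 0) by (unfold z in Ez; nra).
    rewrite Ez. replace (th * ((1 - x) * f x)) with (th*(1-x) * f x) by ring.
    replace ((1-th) * ((1 - y) * f y)) with ((1-th)*(1-y) * f y) by ring.
    rewrite E1, E2. lra.
  - assert (Hz1 : 0 < 1 - z) by lra.
    set (p := th*(1-x)/(1-z)).
    assert (Hp : 0 <= p <= 1).
    { unfold p; split. apply Rdiv_le_0_compat; nra.
      apply Rmult_le_reg_r with (1-z); [lra|]. unfold Rdiv. rewrite Rmult_assoc, Rinv_l by lra.
      unfold z; nra. }
    assert (Hq : 1 - p = (1-th)*(1-y)/(1-z)).
    { unfold p, z in *. field. lra. }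
    assert (Hm : p*x + (1-p)*y <= z).
    { rewrite Hq. unfold p. apply Rmult_le_reg_r with (1-z); [lra|].
      replace ((th * (1 - x) / (1 - z) * x + (1 - th) * (1 - y) / (1 - z) * y) * (1 - z))
        with (th*(1-x)*x + (1-th)*(1-y)*y) by (field; lra).
      assert (0 <= th*(1-th)*((x-y)*(x-y))) by (apply Rmult_le_pos; [apply Rmult_le_pos; lra | pose proof (Rle_0_sqr (x-y)); unfold Rsqr in *; lra]).
      assert (z*(1-z) - (th*(1-x)*x + (1-th)*(1-y)*y) = th*(1-th)*((x-y)*(x-y))) by (unfold z; ring).
      lra. }
    assert (H1 := Hc x y p Hx Hy Hp).
    assert (H2 : f (p*x + (1-p)*y) <= f z) by (apply Hi; nra).
    assert (E : th * ((1 - x) * f x) + (1 - th) * ((1 - y) * f y) = (1-z) * (p * f x + (1-p) * f y)).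
    { rewrite Hq. unfold p. field. lra. }
    rewrite E. apply Rmult_le_compat_l; lra.
Qed.

Lemma refl_conc g : conc01 g -> conc01 (fun a => g (1 - a)).
Proof.
  intros Hc x y th Hx Hy Hth.
  replace (1 - (th*x + (1-th)*y)) with (th*(1-x) + (1-th)*(1-y)) by ring.
  apply Hc; lra.
Qed.

Lemma plus_conc g1 g2 : conc01 g1 -> conc01 g2 -> conc01 (fun a => g1 a + g2 a).
Proof. intros H1 H2 x y th Hx Hy Hth. specialize (H1 x y th Hx Hy Hth). specialize (H2 x y th Hx Hy Hth). lra. Qed.

Lemma K_good f : incr01 f -> conc01 f -> incr01 (Kop f) /\ conc01 (Kop f).
Proof.
  intros Hi Hc.
  set (h := fun a => (1 - a) * f a + (1 - (1 - a)) * f (1 - a)).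
  assert (Hh : conc01 h).
  { unfold h. apply plus_conc; [apply g_conc | apply (refl_conc (fun c => (1-c)*f c)), g_conc]; auto. }
  assert (Hsym : forall a, h (1 - a) = h a).
  { intro a. unfold h. replace (1 - (1 - a)) with a by ring. ring. }
  assert (Hhi : forall x y, 0 <= x -> x <= y -> y <= 1/2 -> h x <= h y).
  { intros x y H0 Hxy Hy.
    destruct (Req_dec x (1/2)) as [Ex|Ex].
    - assert (y = x) by lra. subst. lra.
    - set (th := (1 - x - y)/(1 - 2*x)).
      assert (Hth : 0 <= th <= 1).
      { unfold th. split. apply Rdiv_le_0_compat; lra.
        apply Rmult_le_reg_r with (1 - 2*x); [lra|].
        unfold Rdiv. rewrite Rmult_assoc, Rinv_l by lra. lra. }
      assert (Ey : y = th * x + (1 - th) * (1 - x)).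
      { unfold th. field. lra. }
      assert (H := Hh x (1 - x) th ltac:(lra) ltac:(lra) Hth).
      rewrite Hsym in H. rewrite Ey. lra. }
  assert (Kh : forall t, Kop f t = h (t/(1+t))).
  { intro t. unfold Kop, h. replace (1 - (1 - t/(1+t))) with (t/(1+t)) by ring. reflexivity. }
  assert (Ha : forall t, 0 <= t <= 1 -> 0 <= t/(1+t) <= 1/2).
  { intros t Ht. split. apply Rdiv_le_0_compat; lra.
    apply Rmult_le_reg_r with (1+t); [lra|]. unfold Rdiv. rewrite Rmult_assoc, Rinv_l by lra. lra. }
  assert (Hmono : forall x y, 0 <= x -> x <= y -> x/(1+x) <= y/(1+y)).
  { intros x y H0 H1. apply Rmult_le_reg_r with ((1+x)*(1+y)); [nra|].
    replace (x / (1 + x) * ((1 + x) * (1 + y))) with (x*(1+y)) by (field; lra).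
    replace (y / (1 + y) * ((1 + x) * (1 + y))) with (y*(1+x)) by (field; lra). nra. }
  split.
  - intros x y H0 H1 H2. rewrite !Kh. apply Hhi.
    apply Ha; lra. apply Hmono; lra. apply Ha; lra.
  - intros x y th Hx Hy Hth. rewrite !Kh.
    set (z := th*x + (1-th)*y).
    assert (Hz : 0 <= z <= 1) by (unfold z; nra).
    assert (Hcc : th * (x/(1+x)) + (1-th) * (y/(1+y)) <= z/(1+z)).
    { apply Rmult_le_reg_r with ((1+x)*(1+y)*(1+z)); [apply Rmult_lt_0_compat; [apply Rmult_lt_0_compat|]; lra|].
      replace ((th * (x / (1 + x)) + (1 - th) * (y / (1 + y))) * ((1 + x) * (1 + y) * (1 + z)))
        with ((th*x*(1+y) + (1-th)*y*(1+x))*(1+z)) by (field; lra).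
      replace (z / (1 + z) * ((1 + x) * (1 + y) * (1 + z))) with (z*(1+x)*(1+y)) by (field; lra).
      assert (0 <= th*(1-th)*((x-y)*(x-y))) by (apply Rmult_le_pos; [apply Rmult_le_pos; lra | pose proof (Rle_0_sqr (x-y)); unfold Rsqr in *; lra]).
      assert (z*(1+x)*(1+y) - (th*x*(1+y) + (1-th)*y*(1+x))*(1+z) = th*(1-th)*((x-y)*(x-y))) by (unfold z; ring).
      lra. }
    apply Rle_trans with (h (th * (x/(1+x)) + (1-th) * (y/(1+y)))).
    + apply Hh; try (pose proof (Ha x); pose proof (Ha y); lra).
    + apply Hhi. pose proof (Ha x Hx); pose proof (Ha y Hy); nra. exact Hcc. apply Ha; lra.
Qed.

Definition tau (u t : R) : R := t * (1 - u) / (u + t * (1 - u)).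

Lemma tau_good u : 0 < u < 1 -> incr01 (tau u) /\ conc01 (tau u).
Proof.
  intros Hu. split.
  - intros x y H0 H1 H2. unfold tau.
    apply Rmult_le_reg_r with ((u + x*(1-u))*(u + y*(1-u))); [apply Rmult_lt_0_compat; nra|].
    replace (x * (1 - u) / (u + x * (1 - u)) * ((u + x * (1 - u)) * (u + y * (1 - u))))
      with (x*(1-u)*(u + y*(1-u))) by (field; nra).
    replace (y * (1 - u) / (u + y * (1 - u)) * ((u + x * (1 - u)) * (u + y * (1 - u))))
      with (y*(1-u)*(u + x*(1-u))) by (field; nra).
    assert (0 <= u*(1-u)*(y-x)) by (apply Rmult_le_pos; [apply Rmult_le_pos|]; lra).
    assert (y*(1-u)*(u + x*(1-u)) - x*(1-u)*(u + y*(1-u)) = u*(1-u)*(y-x)) by ring. lra.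
  - intros x y th Hx Hy Hth. unfold tau.
    set (z := th*x + (1-th)*y).
    assert (Hz : 0 <= z <= 1) by (unfold z; nra).
    set (X := u + x*(1-u)). set (Y := u + y*(1-u)). set (Z := u + z*(1-u)).
    assert (HX : 0 < X) by (unfold X; nra). assert (HY : 0 < Y) by (unfold Y; nra).
    assert (HZ : Z = th*X + (1-th)*Y) by (unfold X, Y, Z, z; ring).
    assert (E : forall w W, W = u + w*(1-u) -> 0 < W -> w*(1-u)/W = 1 - u / W).
    { intros w W EW HW. rewrite EW in *. field. lra. }
    rewrite (E x X eq_refl HX), (E y Y eq_refl HY), (E z Z eq_refl) by (rewrite HZ; nra).
    assert (u / Z <= th * (u/X) + (1-th)*(u/Y)).
    { assert (HZp : 0 < th*X+(1-th)*Y) by nra.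
      rewrite HZ. apply Rmult_le_reg_r with (X*Y*(th*X+(1-th)*Y)); [repeat apply Rmult_lt_0_compat; lra|].
      replace (u / (th * X + (1 - th) * Y) * (X * Y * (th * X + (1 - th) * Y))) with (u*(X*Y)) by (field; lra).
      replace ((th * (u / X) + (1 - th) * (u / Y)) * (X * Y * (th * X + (1 - th) * Y)))
        with (u * ((th*Y + (1-th)*X)*(th*X+(1-th)*Y))) by (field; lra).
      apply Rmult_le_compat_l; [lra|].
      assert (0 <= th*(1-th)*((X-Y)*(X-Y))) by (apply Rmult_le_pos; [apply Rmult_le_pos; lra | pose proof (Rle_0_sqr (X-Y)); unfold Rsqr in *; lra]).
      assert ((th*Y + (1-th)*X)*(th*X+(1-th)*Y) - X*Y = th*(1-th)*((X-Y)*(X-Y))) by ring. lra. }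
    lra.
Qed.

Definition V (u : R) (k : nat) : R -> R := Nat.iter k Kop (tau u).

Lemma V_good u k : 0 < u < 1 -> incr01 (V u k) /\ conc01 (V u k).
Proof.
  intro Hu. induction k as [|k IH]. apply tau_good; auto.
  destruct IH. apply K_good; auto.
Qed.

Lemma V_dec u k : 0 < u < 1 -> V u (S k) 1 <= V u k 1.
Proof.
  intro Hu. change (V u (S k) 1) with (Kop (V u k) 1). unfold Kop.
  replace (1/(1+1)) with (1/2) by field. replace (1 - 1/2) with (1/2) by field.
  destruct (V_good u k Hu) as [Hi _]. assert (V u k (1/2) <= V u k 1) by (apply Hi; lra). lra.
Qed.

Lemma Un_cv_ext (U W : nat -> R) l : (forall n, U n = W n) -> Un_cv U l -> Un_cv W l.
Proof. intros E H e He. destruct (H e He) as [N HN]. exists N. intros n Hn. rewrite <- E. auto. Qed.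

Lemma isum_ext f g s : (forall i, f i = g i) -> infinite_sum f s -> infinite_sum g s.
Proof.
  intros E H. apply (Un_cv_ext (fun n => sum_f_R0 f n)); [|exact H].
  intro n. apply sum_eq. intros; auto.
Qed.

Lemma isum_nonneg f s : (forall i, 0 <= f i) -> infinite_sum f s -> 0 <= s.
Proof.
  intros Hf H. apply (@Rle_cv_lim (fun _ => 0) (fun n => sum_f_R0 f n)).
  - intro n. apply cond_pos_sum; auto.
  - intros e He. exists O. intros. unfold Rdist. rewrite Rminus_diag, Rabs_R0. lra.
  - exact H.
Qed.

Definition single (L : R) (i : nat) : R := match i with O => L | S _ => 0 end.

Lemma isum_single L : infinite_sum (single L) L.
Proof.
  assert (E : forall n, sum_f_R0 (single L) n = L).
  { induction n. reflexivity. rewrite tech5, IHn. simpl. ring. }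
  intros e He. exists O. intros n _. rewrite E. unfold Rdist. rewrite Rminus_diag, Rabs_R0. lra.
Qed.

Lemma isum_scal f s c : infinite_sum f s -> infinite_sum (fun i => c * f i) (c * s).
Proof.
  intro H. apply (Un_cv_ext (fun n => c * sum_f_R0 f n)).
  - intro n. rewrite scal_sum. apply sum_eq. intros; ring.
  - apply (CV_mult (fun _ => c) (fun n => sum_f_R0 f n)); [|exact H].
    intros e He. exists O. intros. unfold Rdist. rewrite Rminus_diag, Rabs_R0. lra.
Qed.

Definition shift0 (e : R) (f : nat -> R) (i : nat) : R := match i with O => e | S j => f j end.

Lemma isum_shift e f L : infinite_sum f L -> infinite_sum (shift0 e f) (e + L).
Proof.
  intro H.
  assert (E : forall n, sum_f_R0 (shift0 e f) (S n) = e + sum_f_R0 f n).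
  { induction n. simpl. ring. rewrite tech5, IHn, tech5. simpl. ring. }
  intros eps He. destruct (H eps He) as [N HN]. exists (S N). intros n Hn.
  destruct n as [|n]; [lia|]. rewrite E. unfold Rdist.
  replace (e + sum_f_R0 f n - (e + L)) with (sum_f_R0 f n - L) by ring. apply HN. lia.
Qed.

Definition il (f g : nat -> R) (n : nat) : R := if Nat.even n then f (Nat.div2 n) else g (Nat.div2 n).

Lemma il_even f g n : il f g (2*n) = f n.
Proof. unfold il. rewrite Nat.even_mul, Nat.div2_double. reflexivity. Qed.

Lemma il_odd f g n : il f g (S (2*n)) = g n.
Proof.
  unfold il. rewrite Nat.even_succ, Nat.odd_mul, Nat.div2_succ_double. reflexivity.
Qed.

Lemma il_sum_odd f g n : sum_f_R0 (il f g) (S (2*n)) = sum_f_R0 f n + sum_f_R0 g n.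
Proof.
  induction n.
  - simpl. unfold il. simpl. ring.
  - replace (S (2 * S n)) with (S (S (S (2*n)))) by lia.
    rewrite tech5, tech5, IHn.
    replace (S (S (2*n))) with (2 * S n)%nat by lia. rewrite il_even.
    replace (S (2 * S n)) with (S (2 * S n)) by lia. rewrite il_odd.
    rewrite (tech5 f), (tech5 g). ring.
Qed.

Lemma il_sum_even f g n : sum_f_R0 (il f g) (2 * S n) = sum_f_R0 f (S n) + sum_f_R0 g n.
Proof.
  replace (2 * S n)%nat with (S (S (2*n))) by lia. rewrite tech5, il_sum_odd.
  replace (S (S (2*n))) with (2 * S n)%nat by lia. rewrite il_even, tech5. ring.
Qed.

Lemma Rdist_add a b X Y e : Rdist a X < e/2 -> Rdist b Y < e/2 -> Rdist (a + b) (X + Y) < e.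
Proof.
  unfold Rdist. intros H1 H2.
  replace (a + b - (X + Y)) with ((a - X) + (b - Y)) by ring.
  eapply Rle_lt_trans. apply Rabs_triang. lra.
Qed.

Lemma isum_il f g X Y : infinite_sum f X -> infinite_sum g Y -> infinite_sum (il f g) (X + Y).
Proof.
  intros Hf Hg e He.
  destruct (Hf (e/2) ltac:(lra)) as [N1 H1]. destruct (Hg (e/2) ltac:(lra)) as [N2 H2].
  exists (2 * (S (Nat.max N1 N2)))%nat. intros m Hm.
  destruct (Nat.Even_or_Odd m) as [[k Hk]|[k Hk]]; subst m.
  - destruct k as [|k]; [lia|]. rewrite il_sum_even. apply Rdist_add; [apply H1|apply H2]; lia.
  - replace (2*k+1)%nat with (S (2*k)) by lia. rewrite il_sum_odd. apply Rdist_add; [apply H1|apply H2]; lia.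
Qed.

Definition bnd (A : R -> Prop) := exists M, forall x, A x -> -M <= x <= M.

Lemma cover_nonempty A : bnd A -> exists s, cover_sum A s.
Proof.
  intros [M HM]. set (K := Rabs M + 1).
  exists (single (2*K) O + 0).
  exists (fun _ => -K), (fun i => match i with O => K | S _ => -K end).
  split; [intro i; destruct i; unfold K; pose proof (Rabs_pos M); lra|]. split.
  - intros x Hx. exists O. specialize (HM x Hx). unfold K.
    pose proof (Rle_abs M). lra.
  - simpl. replace (2*K+0) with (2*K) by ring. eapply isum_ext; [|apply isum_single].
    intro i; destruct i; simpl; ring.
Qed.

Lemma cover_nonneg A s : cover_sum A s -> 0 <= s.
Proof.
  intros [a [b [Hab [_ Hs]]]]. refine (isum_nonneg _ _ _ Hs). intro i. simpl. specialize (Hab i). lra.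
Qed.

Lemma leb_glb A : bnd A -> is_glb_R (cover_sum A) (lebesgue A).
Proof.
  intro HA. unfold lebesgue. apply epsilon_spec.
  set (E := fun x => cover_sum A (- x)).
  assert (HE : bound E).
  { exists 0. intros x Hx. unfold E in Hx. apply cover_nonneg in Hx. lra. }
  assert (HE2 : exists x, E x).
  { destruct (cover_nonempty A HA) as [s Hs]. exists (- s). unfold E. rewrite Ropp_involutive. exact Hs. }
  destruct (completeness E HE HE2) as [l [Hl1 Hl2]].
  exists (- l). split.
  - intros r Hr. assert (E (- r)) by (unfold E; rewrite Ropp_involutive; exact Hr).
    specialize (Hl1 _ H). lra.
  - intros m' Hm'. assert (l <= - m').
    { apply Hl2. intros x Hx. specialize (Hm' _ Hx). lra. }
    lra.
Qed.

Lemma leb_le A s : bnd A -> cover_sum A s -> lebesgue A <= s.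
Proof. intros HA Hs. apply (proj1 (leb_glb A HA)). exact Hs. Qed.

Lemma leb_ge A v : bnd A -> (forall s, cover_sum A s -> v <= s) -> v <= lebesgue A.
Proof. intros HA H. apply (proj2 (leb_glb A HA)). exact H. Qed.

Lemma leb_nonneg A : bnd A -> 0 <= lebesgue A.
Proof. intro HA. apply leb_ge; auto. apply cover_nonneg. Qed.

Lemma leb_ext A B : (forall x, A x <-> B x) -> lebesgue A = lebesgue B.
Proof.
  intro H. assert (A = B).
  { apply functional_extensionality. intro x. apply propositional_extensionality. auto. }
  subst. reflexivity.
Qed.

Lemma cover_ext A B s : (forall x, A x <-> B x) -> cover_sum A s -> cover_sum B s.
Proof.
  intros H [a [b [H1 [H2 H3]]]]. exists a, b. repeat split; auto.
  intros x Hx. apply H2, H, Hx.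
Qed.

Lemma leb_transfer A B k : bnd A -> bnd B -> 0 < k ->
  (forall s, cover_sum A s -> cover_sum B (k * s)) -> lebesgue B <= k * lebesgue A.
Proof.
  intros HA HB Hk H.
  assert (lebesgue B / k <= lebesgue A).
  { apply leb_ge; auto. intros s Hs. pose proof (leb_le B (k*s) HB (H s Hs)).
    apply Rmult_le_reg_r with k; auto. unfold Rdiv. rewrite Rmult_assoc, Rinv_l by lra. lra. }
  apply Rmult_le_reg_r with (/ k). apply Rinv_0_lt_compat; auto.
  rewrite (Rmult_comm k), Rmult_assoc, Rinv_r by lra. lra.
Qed.

Lemma cover_scale A s c : 0 < c -> cover_sum A s -> cover_sum (fun z => A (z / c)) (c * s).
Proof.
  intros Hc [a [b [H1 [H2 H3]]]]. exists (fun i => c * a i), (fun i => c * b i).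
  split; [intro i; apply Rmult_le_compat_l; [lra|auto]|]. split.
  - intros z Hz. destruct (H2 _ Hz) as [i Hi]. exists i.
    assert (z = c * (z / c)) by (field; lra). split; rewrite H; apply Rmult_lt_compat_l; lra.
  - eapply isum_ext; [|apply (isum_scal _ _ c H3)]. intro i. simpl. ring.
Qed.

Lemma cover_refl A s : cover_sum A s -> cover_sum (fun z => A (1 - z)) s.
Proof.
  intros [a [b [H1 [H2 H3]]]]. exists (fun i => 1 - b i), (fun i => 1 - a i).
  split; [intro i; specialize (H1 i); lra|]. split.
  - intros z Hz. destruct (H2 _ Hz) as [i Hi]. exists i. lra.
  - eapply isum_ext; [|exact H3]. intro i. simpl. ring.
Qed.

Lemma bnd_scale A c : 0 < c -> bnd A -> bnd (fun z => A (z / c)).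
Proof.
  intros Hc [M HM]. exists (c * Rabs M). intros x Hx. specialize (HM _ Hx).
  assert (x = c * (x / c)) by (field; lra). pose proof (Rle_abs M).
  rewrite H. set (y := x / c) in *. assert (-Rabs M <= y <= Rabs M) by lra.
  split. replace (- (c * Rabs M)) with (c * (- Rabs M)) by ring. apply Rmult_le_compat_l; lra.
  apply Rmult_le_compat_l; lra.
Qed.

Lemma bnd_refl A : bnd A -> bnd (fun z => A (1 - z)).
Proof.
  intros [M HM]. exists (Rabs M + 1). intros x Hx. specialize (HM _ Hx). pose proof (Rle_abs M). lra.
Qed.

Lemma leb_scale A c : 0 < c -> bnd A -> lebesgue (fun z => A (z / c)) = c * lebesgue A.
Proof.
  intros Hc HA. apply Rle_antisym.
  - apply leb_transfer; auto. apply bnd_scale; auto. intros s Hs. apply cover_scale; auto.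
  - assert (H : lebesgue A <= (/ c) * lebesgue (fun z => A (z / c))).
    { apply leb_transfer; auto. apply bnd_scale; auto. apply Rinv_0_lt_compat; auto.
      intros s Hs. apply (cover_ext (fun w => (fun z => A (z / c)) (w / / c))).
      - intro x. simpl. replace (x / / c / c) with x by (field; lra). tauto.
      - apply (cover_scale (fun z => A (z / c)) s (/ c)); auto. apply Rinv_0_lt_compat; auto. }
    apply Rmult_le_reg_l with (/ c). apply Rinv_0_lt_compat; auto.
    rewrite <- Rmult_assoc, Rinv_l, Rmult_1_l by lra. exact H.
Qed.

Lemma leb_refl A : bnd A -> lebesgue (fun z => A (1 - z)) = lebesgue A.
Proof.
  intros HA. apply Rle_antisym.
  - rewrite <- (Rmult_1_l (lebesgue A)). apply leb_transfer; auto. apply bnd_refl; auto. lra.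
    intros s Hs. rewrite Rmult_1_l. apply cover_refl; auto.
  - rewrite <- (Rmult_1_l (lebesgue (fun z => A (1 - z)))). apply leb_transfer; auto. apply bnd_refl; auto. lra.
    intros s Hs. rewrite Rmult_1_l. apply (cover_ext (fun z => (fun w => A (1 - w)) (1 - z))).
    + intro x. simpl. replace (1 - (1 - x)) with x by ring. tauto.
    + apply (cover_refl (fun w => A (1 - w))); auto.
Qed.

Lemma cover_union A B s1 s2 : cover_sum A s1 -> cover_sum B s2 -> cover_sum (fun x => A x \/ B x) (s1 + s2).
Proof.
  intros [a [b [H1 [H2 H3]]]] [a' [b' [H1' [H2' H3']]]].
  exists (il a a'), (il b b'). split; [intro i; unfold il; destruct (Nat.even i); auto|]. split.
  - intros x [Hx|Hx].
    + destruct (H2 _ Hx) as [i Hi]. exists (2*i)%nat. rewrite !il_even. auto.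
    + destruct (H2' _ Hx) as [i Hi]. exists (S (2*i)). rewrite !il_odd. auto.
  - eapply isum_ext; [|apply (isum_il _ _ _ _ H3 H3')]. intro i. unfold il. destruct (Nat.even i); reflexivity.
Qed.

Lemma bnd_union A B : bnd A -> bnd B -> bnd (fun x => A x \/ B x).
Proof.
  intros [M HM] [N HN]. exists (Rabs M + Rabs N). pose proof (Rle_abs M). pose proof (Rle_abs N).
  pose proof (Rabs_pos M). pose proof (Rabs_pos N).
  intros x [Hx|Hx]; [specialize (HM _ Hx)|specialize (HN _ Hx)]; lra.
Qed.

Lemma leb_union_le A B : bnd A -> bnd B -> lebesgue (fun x => A x \/ B x) <= lebesgue A + lebesgue B.
Proof.
  intros HA HB. set (U := lebesgue (fun x => A x \/ B x)).
  assert (H : forall s2, cover_sum B s2 -> U - s2 <= lebesgue A).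
  { intros s2 Hs2. apply leb_ge; auto. intros s1 Hs1.
    assert (U <= s1 + s2) by (apply leb_le; [apply bnd_union; auto|apply cover_union; auto]). lra. }
  assert (U - lebesgue A <= lebesgue B).
  { apply leb_ge; auto. intros s2 Hs2. specialize (H s2 Hs2). lra. }
  lra.
Qed.

Lemma split_len a b c : a <= b ->
  Rmax 0 (Rmin b c - a) + Rmax 0 (b - Rmax a c) = b - a.
Proof. intro H. unfold Rmax, Rmin. repeat destruct Rle_dec; lra. Qed.

Lemma leb_union_ge A B c : bnd A -> bnd B -> (forall x, A x -> x <= c) -> (forall x, B x -> c <= x) ->
  lebesgue A + lebesgue B <= lebesgue (fun x => A x \/ B x).
Proof.
  intros HA HB HAc HBc. apply leb_ge; [apply bnd_union; auto|].
  intros s [a [b [H1 [H2 H3]]]].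
  set (l1 := fun i => Rmax 0 (Rmin (b i) c - a i)).
  set (l2 := fun i => Rmax 0 (b i - Rmax (a i) c)).
  assert (Hl1 : forall i, 0 <= l1 i <= b i - a i).
  { intro i. unfold l1. pose proof (split_len (a i) (b i) c (H1 i)). split. apply Rmax_l.
    pose proof (Rmax_l 0 (b i - Rmax (a i) c)). lra. }
  assert (Hl2 : forall i, 0 <= l2 i <= b i - a i).
  { intro i. unfold l2. pose proof (split_len (a i) (b i) c (H1 i)). split. apply Rmax_l.
    pose proof (Rmax_l 0 (Rmin (b i) c - a i)). lra. }
  destruct (Rseries_CV_comp l1 (fun i => b i - a i) Hl1 (exist _ s H3)) as [L1 HL1].
  destruct (Rseries_CV_comp l2 (fun i => b i - a i) Hl2 (exist _ s H3)) as [L2 HL2].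
  assert (HL : L1 + L2 = s).
  { apply (UL_sequence (fun n => sum_f_R0 (fun i => b i - a i) n)); [|exact H3].
    apply (Un_cv_ext (fun n => sum_f_R0 l1 n + sum_f_R0 l2 n)).
    - intro n. rewrite <- sum_plus. apply sum_eq. intros i _. unfold l1, l2. apply split_len; auto.
    - apply CV_plus; auto. }
  assert (Hall : forall e, 0 < e -> lebesgue A + lebesgue B <= s + 4 * e).
  { intros e He.
    assert (CA : cover_sum A (2*e + L1)).
    { exists (shift0 (c - e) a), (shift0 (c + e) (fun i => a i + l1 i)).
      split; [intro i; destruct i; simpl; [lra|pose proof (Hl1 i); lra]|]. split.
      - intros x Hx. destruct (Req_dec x c) as [Ex|Ex].
        + exists O. simpl. lra.
        + assert (x < c) by (pose proof (HAc _ Hx); lra).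
          destruct (H2 x (or_introl Hx)) as [i Hi]. exists (S i). simpl. split; [lra|].
          unfold l1. eapply Rlt_le_trans; [|apply Rplus_le_compat_l, Rmax_r].
          unfold Rmin. destruct Rle_dec; lra.
      - eapply isum_ext; [|apply (isum_shift (2*e) l1 L1 HL1)]. intro i; destruct i; simpl; ring. }
    assert (CB : cover_sum B (2*e + L2)).
    { exists (shift0 (c - e) (fun i => b i - l2 i)), (shift0 (c + e) b).
      split; [intro i; destruct i; simpl; [lra|pose proof (Hl2 i); lra]|]. split.
      - intros x Hx. destruct (Req_dec x c) as [Ex|Ex].
        + exists O. simpl. lra.
        + assert (c < x) by (pose proof (HBc _ Hx); lra).
          destruct (H2 x (or_intror Hx)) as [i Hi]. exists (S i). simpl. split; [|lra].
          unfold l2. assert (b i - Rmax (a i) c <= Rmax 0 (b i - Rmax (a i) c)) by apply Rmax_r.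
          unfold Rmax in *. destruct Rle_dec; [|lra]. destruct Rle_dec; lra.
      - eapply isum_ext; [|apply (isum_shift (2*e) l2 L2 HL2)]. intro i; destruct i; simpl; ring. }
    pose proof (leb_le A _ HA CA). pose proof (leb_le B _ HB CB). lra. }
  destruct (Rle_dec (lebesgue A + lebesgue B) s) as [Hle|Hnle]; auto.
  exfalso. set (e := (lebesgue A + lebesgue B - s) / 8).
  assert (0 < e) by (unfold e; lra). specialize (Hall e H). unfold e in Hall. lra.
Qed.

Lemma leb_union A B c : bnd A -> bnd B -> (forall x, A x -> x <= c) -> (forall x, B x -> c <= x) ->
  lebesgue (fun x => A x \/ B x) = lebesgue A + lebesgue B.
Proof. intros. apply Rle_antisym. apply leb_union_le; auto. eapply leb_union_ge; eauto. Qed.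

Lemma le_div a N D : 0 < D -> a * D <= N -> a <= N / D.
Proof. intros HD H. apply Rmult_le_reg_r with D; auto. unfold Rdiv. rewrite Rmult_assoc, Rinv_l, Rmult_1_r by lra. exact H. Qed.

Lemma div_le b N D : 0 < D -> N <= b * D -> N / D <= b.
Proof. intros HD H. apply Rmult_le_reg_r with D; auto. unfold Rdiv. rewrite Rmult_assoc, Rinv_l, Rmult_1_r by lra. exact H. Qed.

Definition psi (t z : R) : R := t * z / (1 - z * (1 - t)).

Lemma farey_left x : 0 <= x <= 1/2 -> farey x = x / (1 - x).
Proof. intros H. unfold farey. destruct Rle_dec; [reflexivity|lra]. Qed.

Lemma farey_right x : 1/2 <= x <= 1 -> farey x = (1 - x) / x.
Proof.
  intros H. unfold farey. destruct Rle_dec; [|reflexivity].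
  assert (x = 1/2) by lra. subst. field.
Qed.

Lemma iter_shift k x : farey_iter (S k) x = farey_iter k (farey x).
Proof.
  unfold farey_iter. induction k. reflexivity.
  change (Nat.iter (S (S k)) farey x) with (farey (Nat.iter (S k) farey x)).
  rewrite IHk. reflexivity.
Qed.

Lemma psi_left t z : 0 < t <= 1 -> 0 <= z -> z * (1 + t) <= 1 ->
  0 <= psi t z <= 1/2 /\ farey (psi t z) = psi (t/(1+t)) (z / (1 - t/(1+t))).
Proof.
  intros Ht Hz1 Hz2.
  assert (HD : 0 < 1 - z * (1 - t)) by nra.
  assert (Hp : 0 <= psi t z <= 1/2).
  { unfold psi. split.
    - apply Rmult_le_pos; [nra|]. left. apply Rinv_0_lt_compat. lra.
    - apply div_le; [lra|]. nra. }
  split; [exact Hp|]. rewrite farey_left by exact Hp.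
  assert (Hz3 : z < 1) by nra.
  unfold psi. field. repeat split; try lra; nra.
Qed.

Lemma psi_right t z : 0 < t <= 1 -> 1 <= z * (1 + t) -> z <= 1 ->
  1/2 <= psi t z <= 1 /\ farey (psi t z) = psi (1 - t/(1+t)) ((1 - z) / (t/(1+t))).
Proof.
  intros Ht Hz1 Hz2.
  assert (Hz0 : 0 < z) by nra.
  assert (HD : 0 < 1 - z * (1 - t)) by nra.
  assert (Hp : 1/2 <= psi t z <= 1).
  { unfold psi. split.
    - apply le_div; [lra|]. nra.
    - apply div_le; [lra|]. nra. }
  split; [exact Hp|]. rewrite farey_right by exact Hp.
  unfold psi. field. repeat split; try lra; nra.
Qed.

Lemma le_div_inv a N D : 0 < D -> a <= N / D -> a * D <= N.
Proof. intros HD H. apply Rmult_le_compat_r with (r := D) in H; [|lra].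
  unfold Rdiv in H. rewrite Rmult_assoc, Rinv_l, Rmult_1_r in H by lra. exact H. Qed.

Lemma div_le_inv b N D : 0 < D -> N / D <= b -> N <= b * D.
Proof. intros HD H. apply Rmult_le_compat_r with (r := D) in H; [|lra].
  unfold Rdiv in H. rewrite Rmult_assoc, Rinv_l, Rmult_1_r in H by lra. exact H. Qed.

Definition Sset (u : R) (k : nat) (t : R) : R -> Prop :=
  fun z => 0 <= z <= 1 /\ u <= farey_iter k (psi t z) <= 1.
Definition I01 : R -> Prop := fun z => 0 <= z <= 1.

Lemma bnd_01 (A : R -> Prop) : (forall z, A z -> 0 <= z <= 1) -> bnd A.
Proof. intros H. exists 1. intros x Hx. specialize (H x Hx). lra. Qed.

Lemma S_meas u k : 0 < u < 1 -> forall t, 0 < t <= 1 ->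
  lebesgue (Sset u k t) = V u k t * lebesgue I01.
Proof.
  intros Hu. induction k as [|k IH]; intros t Ht.
  - set (p := u / (u + t * (1 - u))).
    assert (Hq : 0 < u + t * (1 - u)) by nra.
    assert (Hp : 0 < p < 1).
    { unfold p. split. apply Rdiv_lt_0_compat; lra.
      apply Rmult_lt_reg_r with (u + t*(1-u)); [lra|]. unfold Rdiv.
      rewrite Rmult_assoc, Rinv_l by lra. nra. }
    rewrite (leb_ext (Sset u 0 t) (fun w => (fun y => I01 (y / (1 - p))) (1 - w))).
    + assert (Hb0 : bnd I01) by (apply bnd_01; unfold I01; auto).
      assert (E1 := leb_refl (fun y => I01 (y / (1 - p))) ltac:(apply bnd_scale; [lra|auto])).
      assert (E2 := leb_scale I01 (1 - p) ltac:(lra) Hb0).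
      cbv beta in *. rewrite E1, E2.
      f_equal. simpl. unfold tau, p. field. lra.
    + intro z. unfold Sset, I01. simpl. change (farey_iter 0 (psi t z)) with (psi t z).
      unfold psi. split.
      * intros [Hz [H1 H2]].
        assert (HD : 0 < 1 - z * (1 - t)) by nra.
        apply le_div_inv in H1; [|lra].
        assert (p <= z).
        { unfold p. apply div_le; [lra|]. nra. }
        split. apply Rdiv_le_0_compat; lra. apply div_le; lra.
      * intros [H1 H2].
        apply le_div_inv in H1; [|lra]. apply div_le_inv in H2; [|lra].
        assert (Hz : 0 <= z <= 1) by lra.
        assert (HD : 0 < 1 - z * (1 - t)) by nra.
        assert (Hpz : p <= z) by lra. unfold p in Hpz. apply div_le_inv in Hpz; [|lra].
        split; [exact Hz|]. split.
        -- apply le_div; [lra|]. nra.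
        -- apply div_le; [lra|]. nra.
  - set (a := t / (1 + t)).
    assert (Ha : 0 < a <= 1/2).
    { unfold a. split. apply Rdiv_lt_0_compat; lra. apply div_le; lra. }
    set (A := fun z => Sset u k a (z / (1 - a))).
    set (B := fun z => (fun w => Sset u k (1 - a) (w / a)) (1 - z)).
    assert (HbS : forall k t, bnd (Sset u k t)).
    { intros. apply bnd_01. intros z Hz. apply Hz. }
    rewrite (leb_ext (Sset u (S k) t) (fun z => A z \/ B z)).
    + rewrite (leb_union A B (1 - a)).
      * unfold A, B.
        assert (E1 := leb_refl (fun w => Sset u k (1 - a) (w / a)) ltac:(apply bnd_scale; [lra|auto])).
        assert (E2 := leb_scale (Sset u k (1 - a)) a ltac:(lra) (HbS _ _)).
        assert (E3 := leb_scale (Sset u k a) (1 - a) ltac:(lra) (HbS _ _)).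
        cbv beta in *. rewrite E1, E2, E3.
        rewrite IH, IH by lra.
        change (V u (S k) t) with (Kop (V u k) t). unfold Kop. fold a. ring.
      * apply bnd_scale; [lra|auto].
      * apply (bnd_refl (fun w => Sset u k (1 - a) (w / a))), bnd_scale; [lra|auto].
      * intros z Hz. destruct Hz as [[_ Hz] _]. apply div_le_inv in Hz; lra.
      * intros z Hz. destruct Hz as [[_ Hz] _]. apply div_le_inv in Hz; lra.
    + intro z. unfold Sset, A, B. rewrite iter_shift. split.
      * intros [Hz Hf].
        destruct (Rle_dec (z * (1 + t)) 1) as [Hl|Hr].
        -- left. destruct (psi_left t z Ht (proj1 Hz) Hl) as [_ E]. rewrite E in Hf.
           fold a in Hf. split; [|exact Hf]. split. apply Rdiv_le_0_compat; lra.
           apply div_le; [lra|]. unfold a.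
           assert (1 - t / (1 + t) = 1 / (1 + t)) by (field; lra). rewrite H.
           assert (z <= 1 / (1 + t)) by (apply le_div; lra). lra.
        -- right. destruct (psi_right t z Ht ltac:(lra) (proj2 Hz)) as [_ E]. rewrite E in Hf.
           fold a in Hf. split; [|exact Hf]. split. apply Rdiv_le_0_compat; lra.
           apply div_le; [lra|]. unfold a.
           replace (1 * (t / (1 + t))) with (1 - 1 / (1+t)) by (field; lra).
           assert (1 / (1 + t) <= z) by (apply div_le; lra). lra.
      * intros [[Hw Hf]|[Hw Hf]].
        -- assert (Hz : 0 <= z <= 1 - a).
           { destruct Hw as [H1 H2]. split.
             apply le_div_inv in H1; lra. apply div_le_inv in H2; lra. }
           assert (Hl : z * (1 + t) <= 1).
           { assert (1 - a = 1 / (1 + t)) by (unfold a; field; lra).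
             rewrite H in Hz. destruct Hz as [_ Hz]. apply le_div_inv in Hz; lra. }
           destruct (psi_left t z Ht (proj1 Hz) Hl) as [_ E]. rewrite E. fold a.
           split; [|exact Hf]. lra.
        -- assert (Hz : 1 - a <= z <= 1).
           { destruct Hw as [H1 H2]. split.
             apply div_le_inv in H2; lra. apply le_div_inv in H1; lra. }
           assert (Hr : 1 <= z * (1 + t)).
           { assert (1 - a = 1 / (1 + t)) by (unfold a; field; lra).
             rewrite H in Hz. destruct Hz as [Hz _]. apply div_le_inv in Hz; lra. }
           destruct (psi_right t z Ht Hr (proj2 Hz)) as [_ E]. rewrite E. fold a.
           split; [|exact Hf]. lra.
Qed.

Lemma C_eq u m : lebesgue (Cset u (S m)) = lebesgue (Sset u m 1).
Proof.
  apply leb_ext. intro z. unfold Cset, farey_preimage, Sset.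
  replace (S m - 1)%nat with m by lia.
  assert (Hp : psi 1 z = z) by (unfold psi; field; lra). rewrite Hp. tauto.
Qed.

Theorem theorem2 (u : R) (hu : 0 < u < 1) (n : nat) (hn : (1 <= n)%nat) :
  lebesgue (Cset u (S n)) <= lebesgue (Cset u n).
Proof.
  destruct n as [|m]; [lia|].
  rewrite !C_eq, !S_meas by (auto; lra).
  apply Rmult_le_compat_r.
  - apply leb_nonneg, bnd_01. unfold I01; auto.
  - apply V_dec; auto.
Qed.
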